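(* Let $\gamma\colon[0,1]\to(0,1)^d$ be a $1$-Lipschitz curve which is $\theta$-flat in direction $u\in\mathbb{S}^{d-1}$ around an interval $R_0\subseteq[0,1]$, where $\theta\in(0,1/3)$. Let $(a,b)\subseteq R_0$, $q\in R_0\setminus(a,b)$, $r\in\mathbb{R}$, $\tau>0$, and let $h\colon[0,1]^d\to\mathbb{R}$ be a Lipschitz function with $h(x)=r+\tau\|x-\gamma(q)\|$ for $x\in\{\gamma(a),\gamma(b)\}$. Then, writing $(h\circ\gamma)\big|_a^b=h(\gamma(b))-h(\gamma(a))$, $$\big|(h\circ\gamma)\big|_a^b-\tau(b-a)\big|\leq 3\theta\tau(b-a)\quad\text{if } q\leq a\leq b,$$ $$\big|(h\circ\gamma)\big|_a^b-\tau(a-b)\big|\leq 3\theta\tau(b-a)\quad\text{if } a\leq b\leq q.$$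
   Context: A Lipschitz curve is a Lipschitz map $\gamma\colon I\to\mathbb{R}^d$, $I$ a closed interval, whose derivative is bounded away from zero in norm a.e. $\gamma$ is $\theta$-flat in direction $u$ around an interval $R_0$ if for all $t_1,t_2\in[0,1]$ with $\operatorname{dist}(t_i,R_0)<\mathcal{L}(R_0)$ (length of $R_0$) we have $\|\gamma(t_1)-\gamma(t_2)-(t_1-t_2)u\|\leq\theta|t_1-t_2|$. *)

(* Defs.v *)
From HB Require Import structures.
From mathcomp Require Import all_boot all_order all_algebra.
From mathcomp Require Import all_classical all_reals all_analysis.
Set Implicit Arguments. Unset Strict Implicit. Unset Printing Implicit Defensive.
Import Order.TTheory GRing.Theory Num.Theory.
Import numFieldNormedType.Exports.
Local Open Scope classical_set_scope.
Local Open Scope ring_scope.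

Section Defs.
Context {R : realType}.

Definition enorm (d : nat) (v : 'rV[R]_d) : R :=
  Num.sqrt (\sum_(i < d) (v ord0 i) ^+ 2).

Definition lip_on01 (d : nat) (L : R) (g : R -> 'rV[R]_d) : Prop :=
  forall s t : R, s \in `[0, 1] -> t \in `[0, 1] ->
    enorm (g s - g t) <= L * `|s - t|.

Definition lipschitz_curve (d : nat) (g : R -> 'rV[R]_d) : Prop :=
  (exists L : R, lip_on01 L g) /\
  (exists c : R, 0 < c /\
     (@lebesgue_measure R).-negligible
       [set t | t \in `[0, 1] /\ ~ (derivable g t 1 /\ c <= enorm ('D_1 g t))]).

(* theta-flat in direction u around the interval R0, where R0 is any interval
   with endpoints c0 <= c1 (so ]c0,c1[ <= R0 <= [c0,c1] and L(R0) = c1 - c0).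
   dist(t,R0) < L(R0) is unfolded as: some s in R0 has |t - s| < L(R0). *)
Definition flat_around (d : nat) (g : R -> 'rV[R]_d) (theta : R) (u : 'rV[R]_d)
    (R0 : set R) (c0 c1 : R) : Prop :=
  forall t1 t2 : R, t1 \in `[0, 1] -> t2 \in `[0, 1] ->
    (exists s, R0 s /\ `|t1 - s| < c1 - c0) ->
    (exists s, R0 s /\ `|t2 - s| < c1 - c0) ->
    enorm (g t1 - g t2 - (t1 - t2) *: u) <= theta * `|t1 - t2|.

Definition in_cube (d : nat) (x : 'rV[R]_d) : Prop :=
  forall i : 'I_d, 0 <= x ord0 i <= 1.
Definition in_open_cube (d : nat) (x : 'rV[R]_d) : Prop :=
  forall i : 'I_d, 0 < x ord0 i < 1.

End Defs.

(* Main.v *)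
Require Import Defs.
From HB Require Import structures.
From mathcomp Require Import all_boot all_order all_algebra.
From mathcomp Require Import all_classical all_reals all_analysis.
From mathcomp Require Import ring lra.
Import Order.TTheory GRing.Theory Num.Theory.
Import numFieldNormedType.Exports.
Local Open Scope classical_set_scope.
Local Open Scope ring_scope.

Section S.
Context {R : realType}.

Lemma cs (d : nat) (x y : 'I_d -> R) :
  (\sum_i x i * y i) ^+ 2 <= (\sum_i x i ^+ 2) * (\sum_i y i ^+ 2).
Proof.
have E : \sum_i \sum_j (x i * y j - x j * y i) ^+ 2 =
   (\sum_i x i ^+ 2) * (\sum_i y i ^+ 2) + (\sum_i y i ^+ 2) * (\sum_i x i ^+ 2)
   - 2 * ((\sum_i x i * y i) * (\sum_i x i * y i)).
  rewrite !mulr_suml (mulr_sumr _ _ _ 2) -big_split -sumrB /=; apply: eq_bigr => i _.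
  rewrite !mulr_sumr -big_split -sumrB /=; apply: eq_bigr => j _.
  ring.
have : 0 <= \sum_i \sum_j (x i * y j - x j * y i) ^+ 2.
  by apply: sumr_ge0 => i _; apply: sumr_ge0 => j _; apply: sqr_ge0.
rewrite E expr2; nra.
Qed.

Lemma enorm_ge0 d (v : 'rV[R]_d) : 0 <= enorm v.
Proof. exact: sqrtr_ge0. Qed.

Lemma enormZ d (c : R) (v : 'rV[R]_d) : enorm (c *: v) = `|c| * enorm v.
Proof.
rewrite /enorm.
have -> : \sum_(i < d) (c *: v) ord0 i ^+ 2 = c ^+ 2 * \sum_(i < d) v ord0 i ^+ 2.
  by rewrite mulr_sumr; apply: eq_bigr => i _; rewrite mxE exprMn.
by rewrite sqrtrM ?sqr_ge0 // sqrtr_sqr.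
Qed.

Lemma enormD d (v w : 'rV[R]_d) : enorm (v + w) <= enorm v + enorm w.
Proof.
rewrite /enorm.
set A := \sum_(i < d) v ord0 i ^+ 2.
set C := \sum_(i < d) w ord0 i ^+ 2.
set B := \sum_(i < d) v ord0 i * w ord0 i.
have A0 : 0 <= A by apply: sumr_ge0 => i _; apply: sqr_ge0.
have C0 : 0 <= C by apply: sumr_ge0 => i _; apply: sqr_ge0.
have hB : B <= Num.sqrt A * Num.sqrt C.
  rewrite -sqrtrM //.
  apply: (le_trans (ler_norm B)).
  rewrite -sqrtr_sqr; apply: ler_wsqrtr; exact: cs.
have E : \sum_(i < d) (v + w) ord0 i ^+ 2 = A + 2 * B + C.
  rewrite /A /B /C mulr_sumr -!big_split /=; apply: eq_bigr => i _.
  rewrite mxE; ring.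
rewrite E.
have -> : A + 2 * B + C <= (Num.sqrt A + Num.sqrt C) ^+ 2 -> 
  Num.sqrt (A + 2 * B + C) <= Num.sqrt A + Num.sqrt C.
  move=> H; rewrite -[X in _ <= X]ger0_norm ?addr_ge0 ?sqrtr_ge0 //.
  by rewrite -sqrtr_sqr; apply: ler_wsqrtr.
  done.
rewrite sqrrD !sqr_sqrtr //; lra.
Qed.

Arguments enormD {d}.
Arguments enormZ {d}.
Lemma enormN d (v : 'rV[R]_d) : enorm (- v) = enorm v.
Proof. by rewrite -scaleN1r enormZ normrN normr1 mul1r. Qed.

Arguments enormN {d}.
Lemma core d (x y u : 'rV[R]_d) (s del th : R) :
  0 <= s -> 0 <= del -> 0 <= th -> enorm u = 1 ->
  enorm (x - s *: u) <= th * s ->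
  enorm (y - x - del *: u) <= th * del ->
  (1 - 3 * th) * del <= enorm y - enorm x <= (1 + th) * del.
Proof.
move=> s0 d0 t0 u1 H1 H2.
have Ey : y = (y - x - del *: u) + x + del *: u.
  by rewrite addrAC subrK subrK.
have T1 := enormD (y - x - del *: u + x) (del *: u).
have T2 := enormD (y - x - del *: u) x.
rewrite -Ey enormZ u1 ger0_norm // in T1.
have Exd : x + del *: u = y - (y - x - del *: u).
  by rewrite -[y - x - del *: u]addrA -opprD subKr.
have T3 := enormD y (- (y - x - del *: u)).
rewrite enormN -Exd in T3.
have L : enorm x + (1 - 2 * th) * del <= enorm (x + del *: u).
  have [s_eq0|s_gt0] := eqVneq s 0.
    move: H1; rewrite s_eq0 mulr0 scale0r subr0 => H1.
    have nx : enorm x = 0 by apply/eqP; rewrite eq_le H1 enorm_ge0.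
    have T4 := enormD (x + del *: u) (- x).
    rewrite enormN addrAC subrr add0r enormZ u1 ger0_norm // nx in T4.
    rewrite nx; nra.
  have sp : 0 < s by rewrite lt_def s_gt0.
  have Es : (s + del) *: x = s *: (x + del *: u) + del *: (x - s *: u).
    by apply/rowP => i; rewrite !mxE; ring.
  have T6 := enormD (s *: (x + del *: u)) (del *: (x - s *: u)).
  rewrite -Es in T6.
  rewrite !enormZ !ger0_norm ?addr_ge0 // in T6.
  have Ex : s *: u = (- (x - s *: u)) + x by rewrite opprB subrK.
  have T7 := enormD (- (x - s *: u)) x.
  rewrite -Ex enormN enormZ u1 ger0_norm // mulr1 in T7.
  have : s * (enorm x + (1 - 2 * th) * del) <= s * enorm (x + del *: u) by nra.
  by rewrite ler_pM2l.
apply/andP; split; nra.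
Qed.

Lemma itv_sub (a b lo hi : R) : a < b ->
  (forall x, x \in `]a, b[ -> x \in `[lo, hi]) -> lo <= a /\ b <= hi.
Proof.
move=> ab H; split.
  rewrite leNgt; apply/negP => alo.
  have [hlb|hlb] := leP lo b.
    have := H ((a + lo) / 2); rewrite !in_itv /=.
    have -> : (a < (a + lo) / 2) && ((a + lo) / 2 < b) by apply/andP; split; lra.
    move=> /(_ isT) /andP [h1 h2]; lra.
  have := H ((a + b) / 2); rewrite !in_itv /=.
  have -> : (a < (a + b) / 2) && ((a + b) / 2 < b) by apply/andP; split; lra.
  move=> /(_ isT) /andP [h1 h2]; lra.
rewrite leNgt; apply/negP => bhi.
have [hlb|hlb] := leP a hi.
  have := H ((b + hi) / 2); rewrite !in_itv /=.
  have -> : (a < (b + hi) / 2) && ((b + hi) / 2 < b) by apply/andP; split; lra.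
  move=> /(_ isT) /andP [h1 h2]; lra.
have := H ((a + b) / 2); rewrite !in_itv /=.
have -> : (a < (a + b) / 2) && ((a + b) / 2 < b) by apply/andP; split; lra.
move=> /(_ isT) /andP [h1 h2]; lra.
Qed.
End S.

Theorem lemma3p11 (R : realType) (d : nat) (g : R -> 'rV[R]_d) (theta : R)
    (u : 'rV[R]_d) (R0 : set R) (c0 c1 : R) (a b q r tau : R)
    (h : 'rV[R]_d -> R) :
  (forall t, t \in `[0, 1] -> in_open_cube (g t)) ->
  lipschitz_curve g -> lip_on01 1 g ->
  enorm u = 1 ->
  c0 <= c1 -> `]c0, c1[ `<=` R0 -> R0 `<=` `[c0, c1] -> R0 `<=` `[0, 1] ->
  0 < theta -> theta < 1 / 3 ->
  flat_around g theta u R0 c0 c1 ->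
  `]a, b[ `<=` R0 -> R0 q -> ~ (q \in `]a, b[) ->
  0 < tau ->
  (exists L : R, forall x y, in_cube x -> in_cube y -> `|h x - h y| <= L * enorm (x - y)) ->
  h (g a) = r + tau * enorm (g a - g q) ->
  h (g b) = r + tau * enorm (g b - g q) ->
  (q <= a -> a <= b ->
     `|(h (g b) - h (g a)) - tau * (b - a)| <= 3 * theta * tau * (b - a)) /\
  (a <= b -> b <= q ->
     `|(h (g b) - h (g a)) - tau * (a - b)| <= 3 * theta * tau * (b - a)).
Proof.
move=> _ _ _ Hu c01 Hsub1 Hsub2 Hsub3 th0 th13 Hflat Hab Hq _ tau0 _ Ha Hb.
pose P t := t \in `[0, 1] /\ exists s, R0 s /\ `|t - s| < c1 - c0.
have Pabq : a < b -> P a /\ P b /\ P q.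
  move=> ab.
  have [ca bc] := @itv_sub R a b c0 c1 ab (fun x hx => Hsub2 x (Hab x hx)).
  have cc : c0 < c1 by lra.
  have [z0 o1] := @itv_sub R c0 c1 0 1 cc (fun x hx => Hsub3 x (Hsub1 x hx)).
  have qin : q \in `[c0, c1] := Hsub2 q Hq.
  rewrite in_itv /= in qin; move/andP: qin => [q0 q1].
  have Rm : R0 ((a + b) / 2).
    apply: Hab. rewrite /mkset in_itv /=; apply/andP; split; lra.
  split; [|split].
  - split; first by rewrite in_itv /=; apply/andP; split; lra.
    exists ((a + b) / 2); split => //; rewrite ltr_norml; apply/andP; split; lra.
  - split; first by rewrite in_itv /=; apply/andP; split; lra.
    exists ((a + b) / 2); split => //; rewrite ltr_norml; apply/andP; split; lra.
  - split; first by rewrite in_itv /=; apply/andP; split; lra.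
    exists q; split => //; rewrite ltr_norml; apply/andP; split; lra.
have F : a < b -> forall t1 t2, P t1 -> P t2 ->
    enorm (g t1 - g t2 - (t1 - t2) *: u) <= theta * `|t1 - t2|.
  by move=> _ t1 t2 [h1 h2] [h3 h4]; apply: Hflat.
rewrite Ha Hb.
split.
  move=> qa; rewrite le_eqVlt => /orP [/eqP ab | ab].
    by rewrite ab !subrr !mulr0 subr0 normr0.
  have [Pa [Pb Pq]] := Pabq ab.
  have F1 := F ab a q Pa Pq.
  have F2 := F ab b a Pb Pa.
  have aq0 : 0 <= a - q by rewrite subr_ge0.
  have ba0 : 0 <= b - a by rewrite subr_ge0 ltW.
  rewrite (ger0_norm aq0) in F1.
  rewrite (ger0_norm ba0) in F2.
  have e : g b - g q - (g a - g q) - (b - a) *: u = g b - g a - (b - a) *: u.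
    by apply/rowP => i; rewrite !mxE; ring.
  have := @core R d (g a - g q) (g b - g q) u (a - q) (b - a) theta.
  rewrite e => /(_ aq0 ba0 (ltW th0) Hu F1 F2) /andP [l1 l2].
  have -> : r + tau * enorm (g b - g q) - (r + tau * enorm (g a - g q)) - tau * (b - a)
    = tau * (enorm (g b - g q) - enorm (g a - g q) - (b - a)) by ring.
  have -> : 3 * theta * tau * (b - a) = tau * (3 * theta * (b - a)) by ring.
  rewrite normrM gtr0_norm // ler_pM2l //.
  rewrite ler_norml; apply/andP; split; nra.
move=> + bq; rewrite le_eqVlt => /orP [/eqP ab | ab].
  by rewrite ab !subrr !mulr0 subr0 normr0.
have [Pa [Pb Pq]] := Pabq ab.
have F1 := F ab b q Pb Pq.
have F2 := F ab a b Pa Pb.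
have qb0 : 0 <= q - b by rewrite subr_ge0.
have ba0 : 0 <= b - a by rewrite subr_ge0 ltW.
rewrite distrC (ger0_norm qb0) in F1.
rewrite distrC (ger0_norm ba0) in F2.
have e1 : g b - g q - (q - b) *: (- u) = g b - g q - (b - q) *: u.
  by apply/rowP => i; rewrite !mxE; ring.
have e : g a - g q - (g b - g q) - (b - a) *: (- u) = g a - g b - (a - b) *: u.
  by apply/rowP => i; rewrite !mxE; ring.
have Hu' : enorm (- u) = 1 by rewrite enormN.
have := @core R d (g b - g q) (g a - g q) (- u) (q - b) (b - a) theta.
rewrite e e1 => /(_ qb0 ba0 (ltW th0) Hu' F1 F2) /andP [l1 l2].
have -> : r + tau * enorm (g b - g q) - (r + tau * enorm (g a - g q)) - tau * (a - b)
  = - (tau * (enorm (g a - g q) - enorm (g b - g q) - (b - a))) by ring.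
have -> : 3 * theta * tau * (b - a) = tau * (3 * theta * (b - a)) by ring.
rewrite normrN normrM gtr0_norm // ler_pM2l //.
rewrite ler_norml; apply/andP; split; nra.
Qed.
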